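(* Let $\Delta=\{|\zeta|\le1\}$, $\Gamma=\{|\zeta|=1\}$. Let $\varphi$ be a continuous complex-valued function on $\Delta\setminus\{0\}$ which is holomorphic on $\{0<|\zeta|<1\}$ and has either a pole or a removable singularity at $\zeta=0$. Let $\gamma=\{(\zeta,\varphi(\zeta)):\zeta\in\Gamma\}\subset\mathbb{C}^2$ and $\Sigma=\{(\zeta,\varphi(\zeta)):\zeta\in\Delta\setminus\{0\}\}\subset\mathbb{C}^2$. Then $\Sigma\subset\widehat{\gamma}$, where $\widehat\gamma$ is the projective hull of $\gamma$.
   Context: For a compact set $X\subset\mathbb{C}^n$, let $\mathcal{P}_d$ denote the space of complex polynomials on $\mathbb{C}^n$ of degree at most $d$. The projective hull $\widehat X$ of $X$ is the set of points $x\in\mathbb{C}^n$ for which there exists a constant $C_x$ such that $|P(x)|\le (C_x)^d\sup_X|P|$ for all $P\in\mathcal{P}_d$ and all $d\ge0$. *)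

(* Defs.v *)
From HB Require Import structures.
From mathcomp Require Import all_boot all_order all_algebra.
From mathcomp Require Import complex.
From mathcomp Require Import all_classical all_reals all_analysis.
Set Implicit Arguments. Unset Strict Implicit. Unset Printing Implicit Defensive.
Import Order.TTheory GRing.Theory Num.Theory ComplexField.
Import numFieldNormedType.Exports.
Local Open Scope classical_set_scope.
Local Open Scope ring_scope.
Local Open Scope complex_scope.

(* Evaluation of a polynomial on C^2 of degree at most d, given by its
   coefficients c i j (coefficient of x^i y^j, i + j <= d). Every element of
   P_d is of this form for some c. *)
Definition poly2_eval (R : realType) (d : nat) (c : nat -> nat -> R[i])
  (p : R[i] * R[i]) : R[i] :=
  \sum_(i < d.+1) \sum_(j < d.+1 | (i + j <= d)%N) c i j * p.1 ^+ i * p.2 ^+ j.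

(* Projective hull of X in C^2: points x for which there is C_x with
   |P(x)| <= C_x^d sup_X |P| for all P in P_d and all d.  "sup_X |P|" is
   expressed by quantifying over all upper bounds M of |P| on X. *)
Definition projective_hull (R : realType) (X : set (R[i] * R[i])) :
  set (R[i] * R[i]) :=
  [set x | exists C : R, forall (d : nat) (c : nat -> nat -> R[i]) (M : R),
      (forall y, X y -> `|poly2_eval d c y| <= M%:C) ->
      `|poly2_eval d c x| <= (C ^+ d * M)%:C].

Definition holomorphic_on (R : realType) (A : set R[i]) (f : R[i] -> R[i]) :=
  forall z, A z -> derivable (f : R[i]^o -> R[i]^o) (z : R[i]^o) 1.

(* f (defined near 0, off 0) has a pole or a removable singularity at 0:
   z^m f(z) extends holomorphically across 0 for some m. *)
Definition pole_or_removable_at0 (R : realType) (f : R[i] -> R[i]) :=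
  exists (m : nat) (g : R[i] -> R[i]),
    holomorphic_on [set z | `|z| < 1] g /\
    forall z, 0 < `|z| < 1 -> f z = g z / z ^+ m.

Definition continuous_on (R : realType) (A : set R[i]) (f : R[i] -> R[i]) :=
  {within (A : set R[i]^o), continuous (f : R[i]^o -> R[i]^o)}.

(* Main.v *)
Require Import Defs.
From HB Require Import structures.
From mathcomp Require Import all_boot all_order all_algebra.
From mathcomp Require Import complex.
From mathcomp Require Import all_classical all_reals all_analysis.
From mathcomp Require Import ring lra.
Set Implicit Arguments. Unset Strict Implicit. Unset Printing Implicit Defensive.
Import Order.TTheory GRing.Theory Num.Theory ComplexField.
Import numFieldNormedType.Exports.
Local Open Scope classical_set_scope.
Local Open Scope ring_scope.
Local Open Scope complex_scope.
Section P1.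
Context {R : realType}.
Local Notation C := R[i].
Definition nc (z : C) : R := Normc.normc z.

Lemma nc_ge0 z : 0 <= nc z.
Proof. by case: z => a b; rewrite /nc /= sqrtr_ge0. Qed.
Lemma ncD x y : nc (x + y) <= nc x + nc y.
Proof. exact: le_normcD. Qed.
Lemma ncM x y : nc (x * y) = nc x * nc y.
Proof. exact: Normc.normcM. Qed.
Lemma ncV x : nc (x^-1) = (nc x)^-1.
Proof. exact: Normc.normcV. Qed.
Lemma ncN x : nc (- x) = nc x.
Proof. exact: normcN. Qed.
Lemma nc0 : nc 0 = 0.
Proof. exact: Normc.normc0. Qed.
Lemma nc1 : nc 1 = 1.
Proof. exact: Normc.normc1. Qed.
Lemma nc_eq0 x : (nc x == 0) = (x == 0).
Proof. by apply/eqP/eqP => [/Normc.eq0_normc//|->]; rewrite nc0. Qed.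
Lemma nc_gt0 x : x != 0 -> 0 < nc x.
Proof. by move=> x0; rewrite lt_def nc_eq0 x0 nc_ge0. Qed.
Lemma ncB x y : nc (x - y) = nc (y - x).
Proof. by rewrite -ncN opprB. Qed.
Lemma nc_real (r : R) : nc r%:C = `|r|.
Proof. by rewrite /nc /= expr0n /= addr0 sqrtr_sqr. Qed.
Lemma normC (z : C) : `|z| = (nc z)%:C.
Proof. by case: z. Qed.
Lemma ncDB x y z : nc (x - z) <= nc (x - y) + nc (y - z).
Proof. have -> : x - z = (x - y) + (y - z) by ring. exact: ncD. Qed.
Lemma ncBl x y : nc x - nc y <= nc (x - y).
Proof. rewrite lerBlDr; have {1}-> : x = (x - y) + y by ring. exact: ncD. Qed.

Lemma nc_sum (k : nat) (f : nat -> C) :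
  nc (\sum_(j < k) f j) <= \sum_(j < k) nc (f j).
Proof.
elim: k => [|k IH]; first by rewrite !big_ord0 nc0.
rewrite !big_ord_recr /=; apply: le_trans (ncD _ _) _; exact: lerD.
Qed.

Lemma nc_ReIm (z : C) : nc z <= `|complex.Re z| + `|complex.Im z|.
Proof.
case: z => a b /=; rewrite /nc /=.
have h : 0 <= `|a| + `|b| by rewrite addr_ge0.
rewrite -(ger0_norm h) -sqrtr_sqr ler_sqrt ?sqr_ge0 //.
have ha : `|a| ^+ 2 = a ^+ 2 by rewrite real_normK ?num_real.
have hb : `|b| ^+ 2 = b ^+ 2 by rewrite real_normK ?num_real.
have hab : 0 <= `|a| * `|b| by rewrite mulr_ge0.
rewrite sqrrD ha hb; lra.
Qed.

Definition expi (t : R) : C := Complex (cos t) (sin t).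

Lemma nc_expi t : nc (expi t) = 1.
Proof. by rewrite /nc /expi /= cos2Dsin2 sqrtr1. Qed.
Lemma expi_neq0 t : expi t != 0.
Proof. by rewrite -nc_eq0 nc_expi oner_eq0. Qed.
Lemma expiD a b : expi (a + b) = expi a * expi b.
Proof. by rewrite /expi /= cosD sinD; congr Complex; ring. Qed.
Lemma expi0 : expi 0 = 1.
Proof. by rewrite /expi cos0 sin0. Qed.
Lemma expi2pi : expi (pi *+ 2) = 1.
Proof. by rewrite /expi cos2pi sin2pi. Qed.

Lemma lip_sin (a b : R) : `|sin a - sin b| <= `|a - b|.
Proof.
wlog ab : a b / a <= b.
  move=> W; case: (leP a b) => [/W//|/ltW/W]; by rewrite distrC [`|b - a|]distrC.
have [c _ E] := @MVT_segment R (@sin R) (@cos R) a b ab (fun x _ => is_derive_sin x)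
  (continuous_subspaceT (@continuous_sin R)).
rewrite distrC E [`|a - b|]distrC normrM ler_piMl //. exact: cos_max.
Qed.

Lemma lip_cos (a b : R) : `|cos a - cos b| <= `|a - b|.
Proof.
wlog ab : a b / a <= b.
  move=> W; case: (leP a b) => [/W//|/ltW/W]; by rewrite distrC [`|b - a|]distrC.
have [c _ E] := @MVT_segment R (@cos R) (fun x => - @sin R x) a b ab (fun x _ => is_derive_cos x)
  (continuous_subspaceT (@continuous_cos R)).
rewrite distrC E [`|a - b|]distrC normrM normrN ler_piMl //. exact: sin_max.
Qed.

Lemma lip_expi (a b : R) : nc (expi a - expi b) <= 2 * `|a - b|.
Proof.
apply: le_trans (nc_ReIm _) _ => /=.
rewrite mulr2n mulrDl mul1r; apply: lerD; [exact: lip_cos|exact: lip_sin].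
Qed.

End P1.
Section P2.
Context {R : realType}.
Local Notation C := R[i].
Local Notation nc := (@nc R).

Definition ctw (A : C -> Prop) (f : C -> C) (p : C) :=
  forall e : R, 0 < e -> exists d : R, 0 < d /\
    forall z, A z -> nc (z - p) < d -> nc (f z - f p) < e.

Lemma ctw_const A (c : C) p : ctw A (fun _ => c) p.
Proof. move=> e e0; exists 1; split => // z _ _; by rewrite subrr nc0. Qed.

Lemma ctw_id A p : ctw A id p.
Proof. move=> e e0; exists e; split => // z _ //. Qed.

Lemma ctw_sub A B f p : (forall z, B z -> A z) -> ctw A f p -> ctw B f p.
Proof.
move=> BA hf e e0; have [d [d0 H]] := hf e e0; exists d; split => // z Bz.
exact/H/BA.
Qed.

Lemma ctw_loc A f g p : (exists2 r : R, 0 < r & forall z, nc (z - p) < r -> f z = g z) ->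
  ctw A f p -> ctw A g p.
Proof.
move=> [r r0 E] hf e e0; have [d [d0 H]] := hf e e0.
exists (Num.min d r); split; first by rewrite lt_min d0 r0.
move=> z Az; rewrite lt_min => /andP[zd zr].
rewrite -E // -E ?subrr ?nc0 //; exact: H.
Qed.

Lemma ctw_ext A f g p : ctw A f p -> (forall z, f z = g z) -> ctw A g p.
Proof. move=> h E; apply: ctw_loc h; exists 1 => // z _; exact: E. Qed.

Lemma ctw_add A f g p : ctw A f p -> ctw A g p -> ctw A (fun z => f z + g z) p.
Proof.
move=> hf hg e e0; have e20 : 0 < e / 2 by rewrite divr_gt0.
have [d1 [d10 H1]] := hf _ e20; have [d2 [d20 H2]] := hg _ e20.
exists (Num.min d1 d2); split; first by rewrite lt_min d10 d20.
move=> z Az; rewrite lt_min => /andP[z1 z2].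
have -> : f z + g z - (f p + g p) = (f z - f p) + (g z - g p) by ring.
have := ncD (f z - f p) (g z - g p); have := H1 z Az z1; have := H2 z Az z2; lra.
Qed.

Lemma ctw_opp A f p : ctw A f p -> ctw A (fun z => - f z) p.
Proof.
move=> hf e e0; have [d [d0 H]] := hf e e0; exists d; split => // z Az zd.
by rewrite -opprD ncN; apply: H.
Qed.

Lemma ctw_mul A f g p : ctw A f p -> ctw A g p -> ctw A (fun z => f z * g z) p.
Proof.
move=> hf hg e e0.
set F := nc (f p); set G := nc (g p); set K := F + G + 1.
have F0 : 0 <= F by apply: nc_ge0. have G0 : 0 <= G by apply: nc_ge0.
have K0 : 0 < K by rewrite /K; lra.
set eta := Num.min 1 (e / K).
have eta0 : 0 < eta by rewrite lt_min ltr01 divr_gt0.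
have eta1 : eta <= 1 by rewrite ge_min lexx.
have etaK : eta * K <= e.
  by rewrite -ler_pdivlMr // ge_min lexx orbT.
have [d1 [d10 H1]] := hf _ eta0; have [d2 [d20 H2]] := hg _ eta0.
exists (Num.min d1 d2); split; first by rewrite lt_min d10 d20.
move=> z Az; rewrite lt_min => /andP[z1 z2].
have -> : f z * g z - f p * g p =
   (f z - f p) * (g z - g p) + f p * (g z - g p) + g p * (f z - f p) by ring.
have a1 := H1 z Az z1; have b1 := H2 z Az z2.
have a0 := nc_ge0 (f z - f p); have b0 := nc_ge0 (g z - g p).
have t1 := ncD ((f z - f p) * (g z - g p) + f p * (g z - g p)) (g p * (f z - f p)).
have t2 := ncD ((f z - f p) * (g z - g p)) (f p * (g z - g p)).
rewrite !ncM -/F -/G in t1 t2.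
rewrite /K in etaK; nra.
Qed.

Lemma ctw_inv A p : p != 0 -> ctw A (fun z => z^-1) p.
Proof.
move=> p0 e e0; have np := nc_gt0 p0; set P := nc p in np *.
exists (Num.min (P / 2) (e * P ^+ 2 / 2)); split.
  by rewrite lt_min !divr_gt0 // mulr_gt0 // exprn_gt0.
move=> z _; rewrite lt_min => /andP[z1 z2].
have zP : P / 2 < nc z.
  have := ncBl p z; rewrite -/P ncB; lra.
have z0 : z != 0 by rewrite -nc_eq0; apply/eqP => e1; rewrite e1 in zP; lra.
have -> : z^-1 - p^-1 = (p - z) * (z * p)^-1 by field; rewrite z0 p0.
rewrite ncM ncV ncM ncB -/P.
have nz0 : 0 < nc z * P by rewrite mulr_gt0 //; lra.
rewrite ltr_pdivrMr //.
have h3 : e * (P * (P/2)) < e * (nc z * P).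
  by rewrite ltr_pM2l // [nc z * P]mulrC ltr_pM2l.
rewrite (_ : e * P ^+ 2 / 2 = e * (P * (P / 2))) in z2; last by ring.
lra.
Qed.

Lemma ctw_comp A B f g p : ctw B f (g p) -> ctw A g p -> (forall z, A z -> B (g z)) ->
  ctw A (fun z => f (g z)) p.
Proof.
move=> hf hg AB e e0; have [d1 [d10 H1]] := hf e e0.
have [d2 [d20 H2]] := hg d1 d10; exists d2; split => // z Az zd.
apply: H1; [exact: AB | exact: H2].
Qed.

Lemma ctw_sum A (k : nat) (F : nat -> C -> C) p :
  (forall i, ctw A (F i) p) -> ctw A (fun z => \sum_(i < k) F i z) p.
Proof.
move=> hF; elim: k => [|k IH].
  refine (ctw_ext (ctw_const A 0 p) _) => z; by rewrite big_ord0.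
refine (ctw_ext (ctw_add IH (hF k)) _) => z; by rewrite big_ord_recr.
Qed.

Lemma ctw_pow A f p n : ctw A f p -> ctw A (fun z => f z ^+ n) p.
Proof.
move=> hf; elim: n => [|n IH].
  refine (ctw_ext (ctw_const A 1 p) _) => z; by rewrite expr0.
refine (ctw_ext (ctw_mul IH hf) _) => z; by rewrite exprSr.
Qed.

(* Caratheodory differentiability *)
Definition cdc (u : C -> C) (p : C) :=
  exists D : C -> C, (forall z, u z - u p = D z * (z - p)) /\ ctw setT D p.

Lemma cdc_ctw A u p : cdc u p -> ctw A u p.
Proof.
move=> [D [E hD]]; apply: (ctw_sub (A := setT)) => //.
have h : ctw setT (fun z => u p + D z * (z + - p)) p.
  apply: ctw_add; first exact: ctw_const.
  apply: ctw_mul => //; apply: ctw_add; [exact: ctw_id|exact: ctw_const].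
refine (ctw_ext h _) => z; by rewrite -E subrKC.
Qed.

Lemma cdc_const (c : C) p : cdc (fun _ => c) p.
Proof. exists (fun _ => 0); split; [move=> z; by rewrite subrr mul0r|exact: ctw_const]. Qed.

Lemma cdc_id p : cdc id p.
Proof. exists (fun _ => 1); split; [move=> z; by rewrite mul1r|exact: ctw_const]. Qed.

Lemma cdc_add u v p : cdc u p -> cdc v p -> cdc (fun z => u z + v z) p.
Proof.
move=> [D1 [E1 h1]] [D2 [E2 h2]]; exists (fun z => D1 z + D2 z); split.
  move=> z; rewrite mulrDl -E1 -E2; ring.
exact: ctw_add.
Qed.

Lemma cdc_opp u p : cdc u p -> cdc (fun z => - u z) p.
Proof.
move=> [D1 [E1 h1]]; exists (fun z => - D1 z); split.
  move=> z; rewrite mulNr -E1; ring.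
exact: ctw_opp.
Qed.

Lemma cdc_mul u v p : cdc u p -> cdc v p -> cdc (fun z => u z * v z) p.
Proof.
move=> hu hv; have cu : ctw setT u p := cdc_ctw setT hu.
move: hu hv => [D1 [E1 h1]] [D2 [E2 h2]].
exists (fun z => u z * D2 z + v p * D1 z); split.
  move=> z.
  have E1' : u z = D1 z * (z - p) + u p by rewrite -E1 subrK.
  have E2' : v z = D2 z * (z - p) + v p by rewrite -E2 subrK.
  rewrite E1' E2'; ring.
by apply: ctw_add; apply: ctw_mul => //; apply: ctw_const.
Qed.

Lemma cdc_comp u v p : cdc u (v p) -> cdc v p -> cdc (fun z => u (v z)) p.
Proof.
move=> hu hv; have cv : ctw setT v p := cdc_ctw setT hv.
move: hu hv => [D1 [E1 h1]] [D2 [E2 h2]].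
exists (fun z => D1 (v z) * D2 z); split.
  by move=> z; rewrite E1 E2 mulrA.
apply: ctw_mul => //; exact: ctw_comp h1 cv _.
Qed.

Lemma cdc_local u v p : (exists2 r : R, 0 < r & forall z, nc (z - p) < r -> u z = v z) ->
  cdc u p -> cdc v p.
Proof.
move=> [r r0 E] [D [ED hD]].
exists (fun z => if z == p then D p else (v z - v p) / (z - p)); split.
  move=> z; case: eqP => [->|/eqP zp]; first by rewrite !subrr mulr0.
  by rewrite divfK // subr_eq0.
apply: ctw_loc hD; exists r => // z zr; case: eqP => [->//|/eqP zp].
have up : u p = v p by apply: E; rewrite subrr nc0.
by rewrite -E // -up ED mulfK // subr_eq0.
Qed.

Lemma cdc_inv p : p != 0 -> cdc (fun z => z^-1) p.
Proof.
move=> p0.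
exists (fun z => if z == 0 then p^-2 else - (z * p)^-1); split.
  move=> z; case: eqP => [->|/eqP z0]; first by rewrite invr0 sub0r; field.
  by field; rewrite z0 p0.
apply: (@ctw_loc _ (fun z => - (z * p)^-1)); last first.
  apply: ctw_opp; apply: (@ctw_comp _ setT (fun w => w^-1) (fun z => z * p)).
  - by apply: ctw_inv; rewrite mulf_neq0.
  - by apply: ctw_mul; [exact: ctw_id|exact: ctw_const].
  - by [].
exists (nc p) => [|z zp]; first exact: nc_gt0.
case: eqP => // z0; by move: zp; rewrite z0 sub0r ncN ltxx.
Qed.

Lemma cdc_sum (k : nat) (F : nat -> C -> C) p :
  (forall i, cdc (F i) p) -> cdc (fun z => \sum_(i < k) F i z) p.
Proof.
move=> hF; elim: k => [|k IH].
  have := cdc_const 0 p; move=> [D [E h]]; exists D; split => // z.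
  by rewrite !big_ord0 -E.
have := cdc_add IH (hF k); move=> [D [E h]]; exists D; split => // z.
by rewrite !big_ord_recr -E.
Qed.

Lemma cdc_pow u p n : cdc u p -> cdc (fun z => u z ^+ n) p.
Proof.
move=> hu; elim: n => [|n IH].
  exists (fun _ => 0); split; last exact: ctw_const.
  by move=> z; rewrite !expr0 subrr mul0r.
have [D [E h]] := cdc_mul IH hu; exists D; split => // z.
by move: (E z); rewrite /= -!exprSr.
Qed.

End P2.
Section Nest.
Context {R : realType}.

Definition q4 := ((R * R) * (R * R))%type.

Lemma nest (P : R -> R -> R -> R -> Prop) s0 t0 a0 b0 :
  s0 <= t0 -> a0 <= b0 -> P s0 t0 a0 b0 ->
  (forall s t a b, s <= t -> a <= b -> P s t a b ->
     P s ((s + t) / 2) a ((a + b) / 2) \/ P ((s + t) / 2) t a ((a + b) / 2) \/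
     P s ((s + t) / 2) ((a + b) / 2) b \/ P ((s + t) / 2) t ((a + b) / 2) b) ->
  exists x y, (s0 <= x <= t0) /\ (a0 <= y <= b0) /\
    forall d : R, 0 < d -> exists s t a b, P s t a b /\
      s0 <= s /\ s <= x /\ x <= t /\ t <= t0 /\
      a0 <= a /\ a <= y /\ y <= b /\ b <= b0 /\ (t - s) + (b - a) < d.
Proof.
move=> st0 ab0 P0 HP.
pose step (q : q4) : q4 :=
  let: ((s, t), (a, b)) := q in
  let m := (s + t) / 2 in let mu := (a + b) / 2 in
  if `[< P s m a mu >] then ((s, m), (a, mu)) else
  if `[< P m t a mu >] then ((m, t), (a, mu)) else
  if `[< P s m mu b >] then ((s, m), (mu, b)) else ((m, t), (mu, b)).
pose sq n := iter n step ((s0, t0), (a0, b0)).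
pose S n := (sq n).1.1. pose T n := (sq n).1.2.
pose A n := (sq n).2.1. pose B n := (sq n).2.2.
have Hstep n : P (S n) (T n) (A n) (B n) /\ S n <= T n /\ A n <= B n /\
   S n <= S n.+1 /\ T n.+1 <= T n /\ A n <= A n.+1 /\ B n.+1 <= B n /\
   S n.+1 <= T n.+1 /\ A n.+1 <= B n.+1 /\
   T n.+1 - S n.+1 = (T n - S n) / 2 /\ B n.+1 - A n.+1 = (B n - A n) / 2 /\
   P (S n.+1) (T n.+1) (A n.+1) (B n.+1).
  elim: n => [|n IH].
    rewrite /S /T /A /B /sq /= /step.
    have hm1 : s0 <= (s0 + t0) / 2 by lra.
    have hm2 : (s0 + t0) / 2 <= t0 by lra.
    have hm3 : a0 <= (a0 + b0) / 2 by lra.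
    have hm4 : (a0 + b0) / 2 <= b0 by lra.
    case: asboolP => [h1|n1] /=.
      by do !split => //; lra.
    case: asboolP => [h2|n2] /=.
      by do !split => //; lra.
    case: asboolP => [h3|n3] /=.
      by do !split => //; lra.
    have := HP _ _ _ _ st0 ab0 P0; rewrite -/(P _ _ _ _).
    move=> [//|[//|[//|h4]]].
    by do !split => //; lra.
  move: IH => [_ [_ [_ [_ [_ [_ [_ [st [ab [_ [_ Pn]]]]]]]]]]].
  have E : sq n.+2 = step (sq n.+1) by [].
  rewrite /S /T /A /B E.
  move: st ab Pn; rewrite /S /T /A /B.
  case: (sq n.+1) => [[s t] [a b]] /= st ab Pn.
  rewrite /step.
  have hm1 : s <= (s + t) / 2 by lra.
  have hm2 : (s + t) / 2 <= t by lra.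
  have hm3 : a <= (a + b) / 2 by lra.
  have hm4 : (a + b) / 2 <= b by lra.
  case: asboolP => [h1|n1] /=.
    by do !split => //; lra.
  case: asboolP => [h2|n2] /=.
    by do !split => //; lra.
  case: asboolP => [h3|n3] /=.
    by do !split => //; lra.
  have := HP _ _ _ _ st ab Pn.
  move=> [//|[//|[//|h4]]].
  by do !split => //; lra.
have monS n m : (n <= m)%N -> S n <= S m.
  elim: m => [|m IH]; first by rewrite leqn0 => /eqP ->.
  rewrite leq_eqVlt => /orP[/eqP->//|/IH h].
  have := Hstep m; move=> [_ [_ [_ [h2 _]]]]; lra.
have monT n m : (n <= m)%N -> T m <= T n.
  elim: m => [|m IH]; first by rewrite leqn0 => /eqP ->.
  rewrite leq_eqVlt => /orP[/eqP->//|/IH h].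
  have := Hstep m; move=> [_ [_ [_ [_ [h2 _]]]]]; lra.
have monA n m : (n <= m)%N -> A n <= A m.
  elim: m => [|m IH]; first by rewrite leqn0 => /eqP ->.
  rewrite leq_eqVlt => /orP[/eqP->//|/IH h].
  have := Hstep m; move=> [_ [_ [_ [_ [_ [h2 _]]]]]]; lra.
have monB n m : (n <= m)%N -> B m <= B n.
  elim: m => [|m IH]; first by rewrite leqn0 => /eqP ->.
  rewrite leq_eqVlt => /orP[/eqP->//|/IH h].
  have := Hstep m; move=> [_ [_ [_ [_ [_ [_ [h2 _]]]]]]]; lra.
have ST n m : S m <= T n.
  have h1 := monS m (maxn n m) (leq_maxr _ _).
  have h2 := monT n (maxn n m) (leq_maxl _ _).
  have [_ [h3 _]] := Hstep (maxn n m); lra.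
have AB n m : A m <= B n.
  have h1 := monA m (maxn n m) (leq_maxr _ _).
  have h2 := monB n (maxn n m) (leq_maxl _ _).
  have [_ [_ [h3 _]]] := Hstep (maxn n m); lra.
have size n : (T n - S n) + (B n - A n) = ((t0 - s0) + (b0 - a0)) / 2 ^+ n.
  elim: n => [|n IH]; first by rewrite expr0 divr1.
  have [_ [_ [_ [_ [_ [_ [_ [_ [_ [e1 [e2 _]]]]]]]]]]] := Hstep n.
  rewrite e1 e2 exprSr invfM mulrA -IH; lra.
set X := [set S n | n in [set: nat]]; set Y := [set A n | n in [set: nat]].
have hX : has_sup X by split; [exists (S 0); exists 0%N|exists (T 0) => _ [m _ <-]].
have hY : has_sup Y by split; [exists (A 0); exists 0%N|exists (B 0) => _ [m _ <-]].
have Sx n : S n <= sup X by apply: sup_upper_bound => //; exists n.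
have xT n : sup X <= T n.
  by apply: ge_sup; [exists (S 0); exists 0%N|move=> _ [m _ <-]].
have Ay n : A n <= sup Y by apply: sup_upper_bound => //; exists n.
have yB n : sup Y <= B n.
  by apply: ge_sup; [exists (A 0); exists 0%N|move=> _ [m _ <-]].
exists (sup X), (sup Y).
have S0 : S 0 = s0 by []. have T0 : T 0 = t0 by [].
have A0 : A 0 = a0 by []. have B0 : B 0 = b0 by [].
split; first by rewrite -S0 -T0 Sx xT.
split; first by rewrite -A0 -B0 Ay yB.
move=> d d0.
set sz := (t0 - s0) + (b0 - a0).
have sz0 : 0 <= sz by rewrite /sz; lra.
have [n hn] : exists n, sz / d < n%:R.
  by exists (Num.bound (sz / d)); apply: archi_boundP; rewrite divr_ge0 // ltW.
have n2 : (n%:R : R) <= 2 ^+ n.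
  by rewrite -natrX ler_nat; apply: ltnW; apply: ltn_expl.
have [Pn [stn [abn _]]] := Hstep n.
exists (S n), (T n), (A n), (B n); split => //.
rewrite -S0 -T0 -A0 -B0 monS // monT // monA // monB // Sx xT Ay yB.
do 8! split => //.
rewrite size ltr_pdivrMr ?exprn_gt0 //.
rewrite ltr_pdivrMr // in hn.
have h2 : n%:R * d <= 2 ^+ n * d by rewrite ler_pM2r.
rewrite -/sz mulrC; lra.
Qed.

End Nest.
Section P4.
Context {R : realType}.
Local Notation C := R[i].
Local Notation nc := (@nc R).

Definition zp (r t : R) : C := r%:C * expi t.
Definition Ed (u : C -> C) (a b : C) := (u a + u b) * (b - a).
Definition pt (s t : R) (k j : nat) : R := s + j%:R * (t - s) / k%:R.
Definition seg (u : C -> C) (f : R -> C) (s t : R) (k : nat) :=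
  \sum_(j < k) Ed u (f (pt s t k j)) (f (pt s t k j.+1)).
Definition Ssum (u : C -> C) (k : nat) (s t a b : R) :=
  seg u (fun r => zp r a) s t k + seg u (fun th => zp t th) a b k
  - seg u (fun r => zp r b) s t k - seg u (fun th => zp s th) a b k.

Lemma nc_zp r t : nc (zp r t) = `|r|.
Proof. by rewrite /zp ncM nc_real nc_expi mulr1. Qed.

Lemma zp_rad x y t : nc (zp x t - zp y t) = `|x - y|.
Proof. by rewrite /zp -mulrBl -rmorphB ncM nc_real nc_expi mulr1. Qed.

Lemma zp_ang r x y : `|r| <= 1 -> nc (zp r x - zp r y) <= 2 * `|x - y|.
Proof.
move=> r1; rewrite /zp -mulrBr ncM nc_real.
have h := lip_expi x y; have h0 := nc_ge0 (expi x - expi y).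
have h1 : 0 <= `|r| by [].
nra.
Qed.

Lemma zp_dist r r' t t' : `|r'| <= 1 ->
  nc (zp r t - zp r' t') <= `|r - r'| + 2 * `|t - t'|.
Proof.
move=> r1; have := ncDB (zp r t) (zp r' t) (zp r' t').
rewrite zp_rad; have := zp_ang t t' r1; lra.
Qed.

Lemma pt_l s t k j : (0 < k)%N -> pt s t (k + k) j = pt s ((s + t) / 2) k j.
Proof.
move=> k0; have hk : (k%:R : R) != 0 by rewrite pnatr_eq0 -lt0n.
by rewrite /pt natrD; field; rewrite hk /= -mulr2n mulrn_eq0 negb_or hk.
Qed.

Lemma pt_r s t k j : (0 < k)%N -> pt s t (k + k) (k + j) = pt ((s + t) / 2) t k j.
Proof.
move=> k0; have hk : (k%:R : R) != 0 by rewrite pnatr_eq0 -lt0n.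
by rewrite /pt !natrD; field; rewrite hk /= -mulr2n mulrn_eq0 negb_or hk.
Qed.

Lemma seg_split u f s t k :
  seg u f s t (k + k) = seg u f s ((s + t) / 2) k + seg u f ((s + t) / 2) t k.
Proof.
case: k => [|k]; first by rewrite /seg !big_ord0 addr0.
rewrite /seg big_split_ord /=; congr (_ + _); apply: eq_bigr => i _ /=.
  by rewrite !pt_l.
by rewrite -addnS !pt_r.
Qed.

Lemma Ssum_quarter u k s t a b :
  let m := (s + t) / 2 in let mu := (a + b) / 2 in
  Ssum u (k + k) s t a b = Ssum u k s m a mu + Ssum u k m t a mu
    + Ssum u k s m mu b + Ssum u k m t mu b.
Proof. by move=> m mu; rewrite /Ssum !seg_split -/m -/mu; ring. Qed.

Lemma seg_lin u v w f s t k : (forall z, u z = v z + w z) ->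
  seg u f s t k = seg v f s t k + seg w f s t k.
Proof.
move=> E; rewrite /seg -big_split; apply: eq_bigr => i _.
by rewrite /Ed !E /=; ring.
Qed.

Lemma Ssum_lin u v w k s t a b : (forall z, u z = v z + w z) ->
  Ssum u k s t a b = Ssum v k s t a b + Ssum w k s t a b.
Proof. by move=> E; rewrite /Ssum !(seg_lin _ _ _ _ E); ring. Qed.

Lemma seg_aff (al be : C) u f s t k : (0 < k)%N -> (forall z, u z = al + be * z) ->
  seg u f s t k = (al *+ 2 * f t + be * f t ^+ 2) - (al *+ 2 * f s + be * f s ^+ 2).
Proof.
move=> k0 E.
pose G j := al *+ 2 * f (pt s t k j) + be * f (pt s t k j) ^+ 2.
have -> : seg u f s t k = \sum_(j < k) (G j.+1 - G j).
  by apply: eq_bigr => j _; rewrite /Ed !E /G; ring.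
rewrite -(big_mkord xpredT (fun j => G j.+1 - G j)) telescope_sumr //.
have hk : (k%:R : R) != 0 by rewrite pnatr_eq0 -lt0n.
by rewrite /G /pt mul0r mul0r addr0 mulrAC divff // mul1r (addrC s (t - s)) subrK.
Qed.

Lemma Ssum_aff (al be : C) u k s t a b : (0 < k)%N -> (forall z, u z = al + be * z) ->
  Ssum u k s t a b = 0.
Proof. by move=> k0 E; rewrite /Ssum !(seg_aff _ _ _ k0 E); ring. Qed.

Lemma pt_in s t k j : s <= t -> (j <= k)%N -> (0 < k)%N -> s <= pt s t k j <= t.
Proof.
move=> st jk k0; rewrite /pt.
have hk : (0 : R) < k%:R by rewrite ltr0n.
have hj : (j%:R : R) <= k%:R by rewrite ler_nat.
have h0 : (0 : R) <= j%:R by [].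
rewrite -mulrA (mulrC _ (k%:R)^-1) mulrA.
have q0 : (0 : R) <= j%:R / k%:R by rewrite divr_ge0.
have q1 : (j%:R / k%:R : R) <= 1 by rewrite ler_pdivrMr // mul1r.
have ts : 0 <= t - s by rewrite subr_ge0.
apply/andP; split; nra.
Qed.

Lemma pt_step s t k j : (0 < k)%N -> pt s t k j.+1 - pt s t k j = (t - s) / k%:R.
Proof.
move=> k0; have hk : (k%:R : R) != 0 by rewrite pnatr_eq0 -lt0n.
by rewrite /pt -addn1 natrD; field.
Qed.

Lemma seg_bound w f s t k (eta : R) : s <= t -> (0 < k)%N -> 0 <= eta ->
  (forall x, s <= x <= t -> nc (w (f x)) <= eta) ->
  (forall x y, s <= x <= t -> s <= y <= t -> nc (f x - f y) <= 2 * `|x - y|) ->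
  nc (seg w f s t k) <= 4 * eta * (t - s).
Proof.
move=> st k0 e0 Hw Hf.
have hk : (0 : R) < k%:R by rewrite ltr0n.
rewrite /seg; apply: le_trans (nc_sum k (fun j => Ed w (f (pt s t k j)) (f (pt s t k j.+1)))) _.
suff SB : \sum_(j < k) nc (Ed w (f (pt s t k j)) (f (pt s t k j.+1))) <=
   \sum_(j < k) (4 * eta * (t - s) / k%:R).
  apply: le_trans SB _.
  rewrite sumr_const card_ord -[_ *+ k]mulr_natr divfK //.
  by rewrite gt_eqF.
  apply: ler_sum => j _.
  have jk : (j <= k)%N by apply: ltnW.
  have jk1 : (j.+1 <= k)%N by [].
  have p1 := pt_in st jk k0; have p2 := pt_in st jk1 k0.
  rewrite /Ed ncM.
  have a1 := Hw _ p1; have a2 := Hw _ p2.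
  have h3 := Hf _ _ p2 p1.
  rewrite pt_step // ger0_norm ?divr_ge0 ?subr_ge0 // in h3.
  have h4 := ncD (w (f (pt s t k j))) (w (f (pt s t k j.+1))).
  have h5 := nc_ge0 (f (pt s t k j.+1) - f (pt s t k j)).
  have h6 := nc_ge0 (w (f (pt s t k j)) + w (f (pt s t k j.+1))).
  have -> : 4 * eta * (t - s) / k%:R = (eta + eta) * (2 * ((t - s) / k%:R)).
    by rewrite mulrA; ring.
  apply: ler_pM => //; lra.
Qed.

Lemma Ssum_bound w k s t a b (eta : R) : 0 <= s -> s <= t -> t <= 1 -> a <= b ->
  (0 < k)%N -> 0 <= eta ->
  (forall r th, s <= r <= t -> a <= th <= b -> nc (w (zp r th)) <= eta) ->
  nc (Ssum w k s t a b) <= 8 * eta * ((t - s) + (b - a)).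
Proof.
move=> s0 st t1 ab k0 e0 Hw.
have rad (th : R) : forall x y, s <= x <= t -> s <= y <= t ->
    nc (zp x th - zp y th) <= 2 * `|x - y|.
  move=> x y _ _; rewrite zp_rad; have := normr_ge0 (x - y); lra.
have ang (r : R) : s <= r <= t -> forall x y, a <= x <= b -> a <= y <= b ->
    nc (zp r x - zp r y) <= 2 * `|x - y|.
  move=> /andP[h1 h2] x y _ _; apply: zp_ang; rewrite ger0_norm; lra.
have s1 : s <= s <= t by rewrite lexx st.
have t1' : s <= t <= t by rewrite lexx st.
have aa : a <= a <= b by rewrite lexx ab.
have bb : a <= b <= b by rewrite lexx ab.
have B1 := @seg_bound w (fun r => zp r a) s t k eta st k0 e0
   (fun x hx => Hw x a hx aa) (rad a).
have B2 := @seg_bound w (fun th => zp t th) a b k eta ab k0 e0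
   (fun x hx => Hw t x t1' hx) (ang t t1').
have B3 := @seg_bound w (fun r => zp r b) s t k eta st k0 e0
   (fun x hx => Hw x b hx bb) (rad b).
have B4 := @seg_bound w (fun th => zp s th) a b k eta ab k0 e0
   (fun x hx => Hw s x s1 hx) (ang s s1).
rewrite /Ssum.
set x1 := seg _ _ s t k in B1 *; set x2 := seg _ _ a b k in B2 *.
set x3 := seg _ _ s t k in B3 *; set x4 := seg _ _ a b k in B4 *.
have := ncD (x1 + x2 - x3) (- x4); have := ncD (x1 + x2) (- x3);
have := ncD x1 x2; rewrite !ncN; lra.
Qed.

End P4.
Section P5.
Context {R : realType}.
Local Notation C := R[i].
Local Notation nc := (@nc R).

Lemma goursat (u : C -> C) (r1 r2 a b : R) : 0 <= r1 -> r1 <= r2 -> r2 <= 1 -> a <= b ->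
  (forall r th, r1 <= r <= r2 -> a <= th <= b -> cdc u (zp r th)) ->
  forall c : R, 0 < c -> exists N, forall n, (N <= n)%N ->
    nc (Ssum u (2 ^ n) r1 r2 a b) <= c * ((r2 - r1) + (b - a)) ^+ 2.
Proof.
move=> r10 r12 r21 ab Hu c c0.
pose Bad (s t a b : R) := forall N, exists n, (N <= n)%N /\
   c * ((t - s) + (b - a)) ^+ 2 < nc (Ssum u (2 ^ n) s t a b).
have notBad s t a' b' : ~ Bad s t a' b' -> exists N, forall n, (N <= n)%N ->
    nc (Ssum u (2 ^ n) s t a' b') <= c * ((t - s) + (b' - a')) ^+ 2.
  move=> nb; apply: contrapT => h; apply: nb => N; apply: contrapT => h2.
  apply: h; exists N => n Nn; rewrite leNgt; apply/negP => lt.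
  by apply: h2; exists n; split.
apply: contrapT => nG.
have B0 : Bad r1 r2 a b.
  move=> N; apply: contrapT => h; apply: nG; exists N => n Nn.
  rewrite leNgt; apply/negP => lt; apply: h; by exists n; split.
have Her : forall s t a' b', s <= t -> a' <= b' -> Bad s t a' b' ->
     Bad s ((s + t) / 2) a' ((a' + b') / 2) \/ Bad ((s + t) / 2) t a' ((a' + b') / 2) \/
     Bad s ((s + t) / 2) ((a' + b') / 2) b' \/ Bad ((s + t) / 2) t ((a' + b') / 2) b'.
  move=> s t a' b' st ab' Bd; apply: contrapT => nq.
  have n1 : ~ Bad s ((s + t) / 2) a' ((a' + b') / 2) by move=> h; apply: nq; left.
  have n2 : ~ Bad ((s + t) / 2) t a' ((a' + b') / 2) by move=> h; apply: nq; right; left.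
  have n3 : ~ Bad s ((s + t) / 2) ((a' + b') / 2) b' by move=> h; apply: nq; right; right; left.
  have n4 : ~ Bad ((s + t) / 2) t ((a' + b') / 2) b' by move=> h; apply: nq; right; right; right.
  have [N1 H1] := notBad _ _ _ _ n1; have [N2 H2] := notBad _ _ _ _ n2.
  have [N3 H3] := notBad _ _ _ _ n3; have [N4 H4] := notBad _ _ _ _ n4.
  have [n [Nn lt]] := Bd (maxn (maxn N1 N2) (maxn N3 N4)).+1.
  case: n Nn lt => [//|n] Nn lt.
  have hN : (maxn (maxn N1 N2) (maxn N3 N4) <= n)%N by [].
  rewrite !geq_max in hN; move: hN => /andP[/andP[h1 h2] /andP[h3 h4]].
  move: lt; rewrite expnS mul2n -addnn Ssum_quarter.
  have b1 := H1 _ h1; have b2 := H2 _ h2; have b3 := H3 _ h3; have b4 := H4 _ h4.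
  set sz := (t - s) + (b' - a').
  have e1 : (s + t) / 2 - s + ((a' + b') / 2 - a') = sz / 2 by rewrite /sz; field.
  have e2 : t - (s + t) / 2 + ((a' + b') / 2 - a') = sz / 2 by rewrite /sz; field.
  have e3 : (s + t) / 2 - s + (b' - (a' + b') / 2) = sz / 2 by rewrite /sz; field.
  have e4 : t - (s + t) / 2 + (b' - (a' + b') / 2) = sz / 2 by rewrite /sz; field.
  rewrite e1 in b1; rewrite e2 in b2; rewrite e3 in b3; rewrite e4 in b4.
  set X1 := Ssum _ _ s ((s + t) / 2) a' _ in b1 *.
  set X2 := Ssum _ _ ((s + t) / 2) t a' _ in b2 *.
  set X3 := Ssum _ _ s ((s + t) / 2) _ b' in b3 *.
  set X4 := Ssum _ _ ((s + t) / 2) t _ b' in b4 *.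
  have t1 := ncD (X1 + X2 + X3) X4; have t2 := ncD (X1 + X2) X3; have t3 := ncD X1 X2.
  have -> : c * sz ^+ 2 = 4 * (c * (sz / 2) ^+ 2) by field.
  lra.
have [x [y [hx [hy Hsm]]]] := @nest R Bad r1 r2 a b r12 ab B0 Her.
move: hx hy => /andP[x1 x2] /andP[y1 y2].
have [D [ED hD]] := Hu x y (introT andP (conj x1 x2)) (introT andP (conj y1 y2)).
set p := zp x y in ED hD.
have c32 : 0 < c / 32 by rewrite divr_gt0.
have [d [d0 Hd]] := hD _ c32.
have d2 : 0 < d / 2 by rewrite divr_gt0.
have [s [t [a' [b' [BQ [s1 [sx [xt [t2 [a1 [ay [yb [b2 szd]]]]]]]]]]]]] := Hsm _ d2.
set sz := (t - s) + (b' - a') in szd.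
have sz0 : 0 <= sz by rewrite /sz; lra.
have [n [_ lt]] := BQ 0%N.
pose al := u p - D p * p; pose be := D p.
pose rho := fun z => (D z - D p) * (z - p).
have Eu : forall z, u z = (al + be * z) + rho z.
  move=> z; have := ED z; rewrite /al /be /rho => h.
  have -> : u z = (u z - u p) + u p by ring.
  rewrite h; ring.
rewrite (Ssum_lin _ _ _ _ _ Eu) (Ssum_aff (al := al) (be := be)) ?expn_gt0 // add0r in lt.
have Hr : forall r th, s <= r <= t -> a' <= th <= b' -> nc (rho (zp r th)) <= c / 32 * (2 * sz).
  move=> r th /andP[hr1 hr2] /andP[ht1 ht2].
  have hx1 : `|x| <= 1 by rewrite ger0_norm; lra.
  have dd := zp_dist r th y hx1.
  have dr : `|r - x| <= t - s by rewrite ler_norml; apply/andP; split; lra.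
  have dt : `|th - y| <= b' - a' by rewrite ler_norml; apply/andP; split; lra.
  have zd : nc (zp r th - p) <= 2 * sz by rewrite /sz; lra.
  have zd' : nc (zp r th - p) < d by lra.
  have := Hd (zp r th) I zd'; rewrite /rho ncM => h.
  apply: ler_pM => //; [exact: nc_ge0| exact: nc_ge0| exact: ltW].
have s0 : 0 <= s by lra.
have st : s <= t by lra.
have t1 : t <= 1 by lra.
have ab' : a' <= b' by lra.
have eta0 : 0 <= c / 32 * (2 * sz) by rewrite mulr_ge0 ?mulr_ge0 // ltW.
have := Ssum_bound (k := 2 ^ n) s0 st t1 ab' (expn_gt0 _ _) eta0 Hr.
rewrite -/sz => hb.
have : 8 * (c / 32 * (2 * sz)) * sz = c / 2 * sz ^+ 2 by field.
move=> ee; rewrite ee in hb.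
have : 0 <= c / 2 * sz ^+ 2 by rewrite mulr_ge0 ?divr_ge0 ?sqr_ge0 // ltW.
move: lt; rewrite -/sz; move: hb.
move=> hb lt h0.
have h1 : c / 2 * sz ^+ 2 <= c * sz ^+ 2.
  by apply: ler_wpM2r; [exact: sqr_ge0|lra].
lra.
Qed.

End P5.
Section P6.
Context {R : realType}.
Local Notation C := R[i].
Local Notation nc := (@nc R).

Lemma sin_lb (x : R) : 0 < x <= 1 -> x * cos 1 <= sin x.
Proof.
move=> /andP[x0 x1].
have [c /andP[c0 c1]] : exists2 c, 0 <= c <= x & sin x - sin 0 = cos c * (x - 0).
  have [c hc E] := @MVT_segment R (@sin R) (@cos R) 0 x (ltW x0)
    (fun y _ => is_derive_sin y) (continuous_subspaceT (@continuous_sin R)).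
  by exists c => //; move: hc; rewrite in_itv.
rewrite sin0 !subr0 => ->; rewrite mulrC ler_pM2r //.
have pi1 : 1 <= (pi : R) by have := @pi_ge2 R; lra.
case: (ltP c 1) => [c1'|c1']; last by have -> : c = 1 by lra.
rewrite le_eqVlt; apply/orP; right.
have m1 : (1 : R) \in `[0, pi] by rewrite in_itv /= ler01 pi1.
have mc : c \in `[0, pi] by rewrite in_itv /= c0 /=; lra.
by rewrite (ltr_cos mc m1).
Qed.

Lemma expiN (x : R) : expi (- x) = (expi x)^-1.
Proof.
apply: (mulfI (expi_neq0 x)); rewrite -expiD addrN expi0 divff //.
exact: expi_neq0.
Qed.

Lemma nc_om (x : R) : 0 < x <= 1 -> 2 * x * cos 1 <= nc (expi x - (expi x)^-1).
Proof.
move=> hx; rewrite -expiN /expi cosN sinN /nc /=.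
rewrite subrr expr0n /= add0r opprK sqrtr_sqr.
have := sin_lb hx; have := ler_norm (sin x + sin x); lra.
Qed.

Definition Tsum (h : C -> C) (k : nat) (r : R) :=
  \sum_(j < k) h (zp r (pt 0 ((pi : R) *+ 2) k j)).

Lemma zp_periodic r : zp r ((pi : R) *+ 2) = zp r 0.
Proof. by rewrite /zp expi2pi expi0. Qed.

Lemma ang_sum (h : C -> C) (k : nat) (r : R) : 0 < r -> (0 < k)%N ->
  seg (fun z => h z / z) (fun th => zp r th) 0 ((pi : R) *+ 2) k =
  (expi (((pi : R) *+ 2) / k%:R) - (expi (((pi : R) *+ 2) / k%:R))^-1) * Tsum h k r.
Proof.
move=> r0 k0; set om := expi _.
have hk : (k%:R : R) != 0 by rewrite pnatr_eq0 -lt0n.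
have om0 : om != 0 by exact: expi_neq0.
pose a j := zp r (pt 0 ((pi : R) *+ 2) k j).
have a0 j : a j != 0 by rewrite -nc_eq0 nc_zp gt_eqF // normr_gt0 gt_eqF.
have aS j : a j.+1 = a j * om.
  rewrite /a /zp -mulrA -expiD; congr (_ * expi _).
  by rewrite /pt -addn1 natrD; field.
pose F j := h (a j).
have shift : \sum_(j < k) F j.+1 = \sum_(j < k) F j.
  have e1 : \sum_(i < k.+1) F i = F 0%N + \sum_(i < k) F i.+1.
    by rewrite big_ord_recl; congr (_ + _); apply: eq_bigr => i _; rewrite lift0.
  have e2 : \sum_(i < k.+1) F i = \sum_(i < k) F i + F k by rewrite big_ord_recr.
  have Fk : F k = F 0%N.
    have pk : pt 0 ((pi : R) *+ 2) k k = (pi : R) *+ 2.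
      by rewrite /pt subr0 mulrAC divff // mul1r add0r.
    have p0 : pt 0 ((pi : R) *+ 2) k 0 = 0 by rewrite /pt !mul0r addr0.
    by rewrite /F /a pk p0 zp_periodic.
  rewrite Fk e1 addrC in e2; exact: (addIr _ e2).
rewrite /seg /Tsum.
have -> : \sum_(j < k) Ed (fun z => h z / z) (zp r (pt 0 ((pi : R) *+ 2) k j))
   (zp r (pt 0 ((pi : R) *+ 2) k j.+1)) =
   \sum_(j < k) (F j * (om - 1) + F j.+1 * (1 - om^-1)).
  apply: eq_bigr => j _; rewrite /Ed -/(a j) -/(a j.+1) aS /F aS.
  by field; rewrite a0 om0.
rewrite big_split /= -!mulr_suml shift -/(F _).
have -> : \sum_(j < k) h (zp r (pt 0 ((pi : R) *+ 2) k j)) = \sum_(j < k) F j by [].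
by ring.
Qed.

End P6.
Section P7.
Context {R : realType}.
Local Notation C := R[i].
Local Notation nc := (@nc R).
Local Notation tpi := ((pi : R) *+ 2).

Lemma nc_natr (k : nat) : nc (k%:R : C) = k%:R.
Proof. by rewrite -(rmorph_nat (real_complex R)) nc_real normr_nat. Qed.

Lemma Ssum_annulus (h : C -> C) k r1 r2 : 0 < r1 -> 0 < r2 -> (0 < k)%N ->
  Ssum (fun z => h z / z) k r1 r2 0 tpi =
  (expi (tpi / k%:R) - (expi (tpi / k%:R))^-1) * (Tsum h k r2 - Tsum h k r1).
Proof.
move=> r10 r20 k0; rewrite /Ssum.
have -> : seg (fun z => h z / z) (fun r => zp r tpi) r1 r2 k =
          seg (fun z => h z / z) (fun r => zp r 0) r1 r2 k.
  by apply: eq_bigr => j _; rewrite !zp_periodic.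
rewrite !ang_sum //; ring.
Qed.

Lemma avg_bound (F : nat -> C) (c : C) (k : nat) (B : R) : (0 < k)%N ->
  (forall j, (j < k)%N -> nc (F j - c) <= B) ->
  nc ((\sum_(j < k) F j) / k%:R - c) <= B.
Proof.
move=> k0 HF.
have hk : (k%:R : C) != 0 by rewrite pnatr_eq0 -lt0n.
have hkR : (0 : R) < k%:R by rewrite ltr0n.
have -> : (\sum_(j < k) F j) / k%:R - c = (\sum_(j < k) (F j - c)) / k%:R.
  by rewrite sumrB sumr_const card_ord -mulr_natr; field.
rewrite ncM ncV nc_natr ler_pdivrMr //.
apply: le_trans (nc_sum k (fun j => F j - c)) _.
have : \sum_(j < k) nc (F j - c) <= \sum_(j < k) B by apply: ler_sum => j _; apply: HF.
by rewrite sumr_const card_ord -[_ *+ k]mulr_natr.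
Qed.

Lemma avg_close (h : C -> C) (r1 r2 e : R) :
  (forall z, nc z < 1 -> cdc h z) -> 0 < r1 -> r1 <= r2 -> r2 < 1 -> 0 < e ->
  exists n, nc (Tsum h (2 ^ n) r2 / (2 ^ n)%:R - Tsum h (2 ^ n) r1 / (2 ^ n)%:R) <= e.
Proof.
move=> Hd r10 r12 r21 e0.
have pi0 : (0 : R) < pi := @pi_gt0 R.
have pi4 : (pi : R) < 4 by have := @pihalf_lt2 R; lra.
have c1 : (0 : R) < cos 1 := @cos1_gt0 R.
set sz := (r2 - r1) + (tpi - 0).
have sz0 : 0 < sz by rewrite /sz; lra.
pose K : R := 4 * pi * cos 1.
have K0 : 0 < K by rewrite /K !mulr_gt0.
pose c : R := e * K / sz ^+ 2.
have cc : 0 < c by rewrite /c !mulr_gt0 // invr_gt0 exprn_gt0.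
have Hu : forall r th, r1 <= r <= r2 -> 0 <= th <= tpi -> cdc (fun z => h z / z) (zp r th).
  move=> r th /andP[h1 h2] _.
  have hr : 0 < r by lra.
  apply: cdc_mul; first by apply: Hd; rewrite nc_zp gtr0_norm //; lra.
  by apply: cdc_inv; rewrite -nc_eq0 nc_zp gtr0_norm // gt_eqF.
have [N HN] := goursat (ltW r10) r12 (ltW r21) (ltW (mulrn_wgt0 2 pi0)) Hu cc.
set n := maxn N 3.
have Nn : (N <= n)%N by rewrite leq_maxl.
have := HN n Nn; rewrite -/sz Ssum_annulus ?expn_gt0 //; last by lra.
set k := (2 ^ n)%N.
have k8 : (2 ^ 3 <= k)%N by rewrite /k leq_pexp2l // leq_maxr.
have k8R : (8 : R) <= k%:R.
  have -> : (8 : R) = (2 ^ 3)%N%:R by rewrite natrX.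
  by rewrite ler_nat.
have kR : (0 : R) < k%:R by lra.
have hx : 0 < tpi / k%:R <= 1.
  apply/andP; split; first by rewrite divr_gt0 // mulrn_wgt0.
  by rewrite ler_pdivrMr // mul1r; lra.
have om := nc_om hx.
rewrite ncM => hb; exists n; rewrite -/k.
have -> : Tsum h k r2 / k%:R - Tsum h k r1 / k%:R = (Tsum h k r2 - Tsum h k r1) / k%:R.
  by rewrite mulrBl.
rewrite ncM ncV nc_natr ler_pdivrMr //.
set X := nc (Tsum h k r2 - Tsum h k r1) in hb *.
have X0 : 0 <= X by apply: nc_ge0.
have E1 : 2 * (tpi / k%:R) * cos 1 * X <= c * sz ^+ 2.
  apply: le_trans hb; apply: ler_wpM2r => //.
have E2 : c * sz ^+ 2 = e * K by rewrite /c; field; rewrite gt_eqF.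
have E3 : 2 * (tpi / k%:R) * cos 1 * X = K * (X / k%:R).
  by rewrite /K; field; rewrite gt_eqF.
rewrite E2 E3 in E1.
have : X / k%:R <= e by rewrite -(ler_pM2l K0) mulrC; lra.
by rewrite ler_pdivrMr.
Qed.

End P7.
Section P8.
Context {R : realType}.
Local Notation C := R[i].
Local Notation nc := (@nc R).
Local Notation tpi := ((pi : R) *+ 2).

Lemma bnd_unif (h : C -> C) (M e : R) : 0 < e ->
  (forall w, nc w = 1 -> ctw (fun z => nc z <= 1) h w) ->
  (forall w, nc w = 1 -> nc (h w) <= M) ->
  exists rho, 0 < rho /\ rho < 1 /\ forall r th, rho <= r -> r <= 1 -> 0 <= th -> th <= tpi ->
    nc (h (zp r th)) <= M + e.
Proof.
move=> e0 Hb HM.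
have pi0 : (0 : R) < pi := @pi_gt0 R.
apply: contrapT => nG.
pose P (s t a b : R) := forall rho, rho < 1 -> exists r th, s <= r /\ r <= t /\ a <= th /\
   th <= b /\ rho <= r /\ r <= 1 /\ M + e < nc (h (zp r th)).
have notP s t a b : ~ P s t a b -> exists rho, rho < 1 /\ forall r th, s <= r -> r <= t ->
   a <= th -> th <= b -> rho <= r -> r <= 1 -> nc (h (zp r th)) <= M + e.
  move=> nP; apply: contrapT => h1; apply: nP => rho rho1; apply: contrapT => h2.
  apply: h1; exists rho; split => // r th h3 h4 h5 h6 h7 h8.
  rewrite leNgt; apply/negP => h9; apply: h2; exists r, th; do !split => //.
have P0 : P 0 1 0 tpi.
  move=> rho rho1.
  have [rho' [r1 r2 r3]] : exists rho' : R, [/\ 1/2 <= rho', rho <= rho' & rho' < 1].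
    case: (ltP rho (1/2)) => hr; [exists (1/2)|exists rho]; split => //; lra.
  apply: contrapT => nex; apply: nG; exists rho'; split; first lra.
  split => // r th h1 h2 h3 h4; rewrite leNgt; apply/negP => h5; apply: nex.
  exists r, th; do !split => //; lra.
have Her : forall s t a b, s <= t -> a <= b -> P s t a b ->
     P s ((s + t) / 2) a ((a + b) / 2) \/ P ((s + t) / 2) t a ((a + b) / 2) \/
     P s ((s + t) / 2) ((a + b) / 2) b \/ P ((s + t) / 2) t ((a + b) / 2) b.
  move=> s t a b st ab Ps; apply: contrapT => nq.
  have n1 : ~ P s ((s + t) / 2) a ((a + b) / 2) by move=> h1; apply: nq; left.
  have n2 : ~ P ((s + t) / 2) t a ((a + b) / 2) by move=> h1; apply: nq; right; left.
  have n3 : ~ P s ((s + t) / 2) ((a + b) / 2) b by move=> h1; apply: nq; right; right; left.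
  have n4 : ~ P ((s + t) / 2) t ((a + b) / 2) b by move=> h1; apply: nq; right; right; right.
  have [p1 [q1 H1]] := notP _ _ _ _ n1; have [p2 [q2 H2]] := notP _ _ _ _ n2.
  have [p3 [q3 H3]] := notP _ _ _ _ n3; have [p4 [q4 H4]] := notP _ _ _ _ n4.
  pose rho := Num.max (Num.max p1 p2) (Num.max p3 p4).
  have rho1 : rho < 1 by rewrite /rho !gt_max q1 q2 q3 q4.
  have l1 : p1 <= rho by rewrite /rho !le_max lexx.
  have l2 : p2 <= rho by rewrite /rho !le_max lexx !orbT.
  have l3 : p3 <= rho by rewrite /rho !le_max lexx !orbT.
  have l4 : p4 <= rho by rewrite /rho !le_max lexx !orbT.
  have [r [th [h1 [h2 [h3 [h4 [h5 [h6 h7]]]]]]]] := Ps _ rho1.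
  case: (leP r ((s + t) / 2)) => hr; case: (leP th ((a + b) / 2)) => ht.
  - have := H1 r th h1 hr h3 ht (le_trans l1 h5) h6; lra.
  - have := H3 r th h1 hr (ltW ht) h4 (le_trans l3 h5) h6; lra.
  - have := H2 r th (ltW hr) h2 h3 ht (le_trans l2 h5) h6; lra.
  - have := H4 r th (ltW hr) h2 (ltW ht) h4 (le_trans l4 h5) h6; lra.
have st0 : (0 : R) <= 1 by [].
have ab0 : (0 : R) <= tpi by rewrite mulrn_wge0 // ltW.
have [x [y [/andP[x0 x1] [/andP[y0 y1] Hsm]]]] := @nest R P 0 1 0 tpi st0 ab0 P0 Her.
case: (ltP x 1) => [xl|xg].
  have d0 : 0 < (1 - x) / 2 by rewrite divr_gt0 // subr_gt0.
  have [s [t [a [b [PQ [s1 [sx [xt [t1 [a1 [ay [yb [b1 sz]]]]]]]]]]]]] := Hsm _ d0.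
  have tl : t < 1 by lra.
  have hh : (1 + t) / 2 < 1 by lra.
  have [r [th [h1 [h2 [_ [_ [h5 _]]]]]]] := PQ ((1 + t) / 2) hh.
  lra.
have x1' : x = 1 by lra.
set p := zp 1 y.
have np : nc p = 1 by rewrite /p nc_zp normr1.
have [d [d0 Hd]] := Hb p np e e0.
have d2 : 0 < d / 2 by rewrite divr_gt0.
have [s [t [a [b [PQ [s1 [sx [xt [t1 [a1 [ay [yb [b1 sz]]]]]]]]]]]]] := Hsm _ d2.
have [r [th [h1 [h2 [h3 [h4 [h5 [h6 h7]]]]]]]] := PQ 0 ltr01.
have nz : nc (zp r th) <= 1 by rewrite nc_zp ger0_norm.
have n1 : `|1 : R| <= 1 by rewrite normr1.
have dd := zp_dist r th y n1.
have dr : `|r - 1| <= t - s by rewrite ler_norml; apply/andP; split; lra.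
have dt : `|th - y| <= b - a by rewrite ler_norml; apply/andP; split; lra.
have zd : nc (zp r th - p) < d by rewrite /p; lra.
have := Hd _ nz zd; have := HM _ np.
have := ncD (h p) (h (zp r th) - h p); rewrite addrC subrK; lra.
Qed.

Lemma mv0 (h : C -> C) (M : R) :
  (forall z, nc z < 1 -> cdc h z) ->
  (forall w, nc w = 1 -> ctw (fun z => nc z <= 1) h w) ->
  (forall w, nc w = 1 -> nc (h w) <= M) ->
  nc (h 0) <= M.
Proof.
move=> Hd Hb HM; apply/ler_addgt0Pr => e' e'0.
pose e := e' / 3; have e0 : 0 < e by rewrite divr_gt0.
have [rho [rho0 [rho1 Hr]]] := bnd_unif e0 Hb HM.
have c0 : ctw setT h 0 by apply: cdc_ctw; apply: Hd; rewrite nc0.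
have [d [d0 Hd0]] := c0 _ e0.
pose r1 := Num.min (d / 2) (1 / 2).
have r10 : 0 < r1 by rewrite lt_min !divr_gt0.
have r1d : r1 < d by rewrite /r1 gt_min; apply/orP; left; lra.
have r11 : r1 < 1 by rewrite /r1 gt_min; apply/orP; right; lra.
pose r2 := Num.max rho r1.
have r12 : r1 <= r2 by rewrite le_max lexx orbT.
have r21 : r2 < 1 by rewrite gt_max rho1 r11.
have rr2 : rho <= r2 by rewrite le_max lexx.
have [n Hn] := avg_close Hd r10 r12 r21 e0.
set k := (2 ^ n)%N in Hn.
have k0 : (0 < k)%N by rewrite expn_gt0.
have A1 : nc (Tsum h k r1 / k%:R - h 0) <= e.
  rewrite /Tsum; apply: (avg_bound (F := fun j => h (zp r1 (pt 0 tpi k j)))) => // j jk.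
  apply: ltW; apply: Hd0 => //.
  by rewrite subr0 nc_zp gtr0_norm.
have A2 : nc (Tsum h k r2 / k%:R - 0) <= M + e.
  rewrite /Tsum; apply: (avg_bound (F := fun j => h (zp r2 (pt 0 tpi k j)))) => // j jk.
  have ab0 : (0 : R) <= tpi by rewrite mulrn_wge0 // ltW // (@pi_gt0 R).
  have := pt_in (s := 0) (t := tpi) ab0 (ltnW jk) k0.
  rewrite subr0; move=> /andP[t0 t1]; apply: Hr => //; lra.
rewrite subr0 in A2.
set X1 := Tsum h k r1 / k%:R in A1 Hn; set X2 := Tsum h k r2 / k%:R in A2 Hn.
have -> : h 0 = - (X1 - h 0) + ((X1 - X2) + X2) by ring.
have := ncD (- (X1 - h 0)) ((X1 - X2) + X2); have := ncD (X1 - X2) X2.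
rewrite ncN ncB; rewrite /e in A1 A2 Hn; lra.
Qed.

End P8.
Section P9.
Context {R : realType}.
Local Notation C := R[i].
Local Notation nc := (@nc R).

Lemma nc2 (z : C) : nc z ^+ 2 = complex.Re z ^+ 2 + complex.Im z ^+ 2.
Proof. by case: z => a b; rewrite /nc /= sqr_sqrtr // addr_ge0 ?sqr_ge0. Qed.

Lemma mob_id (a w : C) :
  nc (1 + conjc a * w) ^+ 2 - nc (w + a) ^+ 2 = (1 - nc a ^+ 2) * (1 - nc w ^+ 2).
Proof. rewrite !nc2; case: a => a1 a2; case: w => w1 w2 /=; ring. Qed.

Lemma nc_conj (a : C) : nc (conjc a) = nc a.
Proof. by case: a => a1 a2; rewrite /nc /= sqrrN. Qed.

Definition mob (a w : C) := (w + a) * (1 + conjc a * w)^-1.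

Lemma mob_den (a w : C) : nc a < 1 -> nc w <= 1 -> 0 < nc (1 + conjc a * w).
Proof.
move=> a1 w1; have := ncBl 1 (- (conjc a * w)); rewrite opprK nc1 ncN ncM nc_conj.
have := nc_ge0 a; have := nc_ge0 w; nra.
Qed.

Lemma mob_nc (a w : C) : nc a < 1 -> nc w <= 1 ->
  (nc w < 1 -> nc (mob a w) < 1) /\ (nc w = 1 -> nc (mob a w) = 1) /\ nc (mob a w) <= 1.
Proof.
move=> a1 w1; have d0 := mob_den a1 w1.
have E := mob_id a w.
have x0 := nc_ge0 (w + a); set X := nc (w + a) in E x0 *.
set Y := nc (1 + conjc a * w) in E d0 *.
have a0 := nc_ge0 a; have w0 := nc_ge0 w.
have e : nc (mob a w) = X / Y by rewrite /mob ncM ncV.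
rewrite e; split; [|split].
- move=> wl; rewrite ltr_pdivrMr // mul1r.
  have : 0 < (1 - nc a ^+ 2) * (1 - nc w ^+ 2) by apply: mulr_gt0; nra.
  nra.
- move=> we; rewrite we expr1n subrr mulr0 in E.
  have XY : X = Y.
    apply/eqP; rewrite -(@eqrXn2 _ 2) //; last exact: ltW.
    by rewrite eq_sym -subr_eq0 E.
  by rewrite XY divff // gt_eqF.
- rewrite ler_pdivrMr // mul1r.
  have : 0 <= (1 - nc a ^+ 2) * (1 - nc w ^+ 2) by apply: mulr_ge0; nra.
  nra.
Qed.

Lemma mob_cdc (a w : C) : nc a < 1 -> nc w <= 1 -> cdc (mob a) w.
Proof.
move=> a1 w1; have d0 := mob_den a1 w1.
rewrite /mob; apply: (@cdc_mul _ (fun z => z + a) (fun z => (1 + conjc a * z)^-1)).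
  exact: (cdc_add (cdc_id w) (cdc_const a w)).
apply: (@cdc_comp _ (fun z => z^-1) (fun z => 1 + conjc a * z)).
  by apply: cdc_inv; rewrite -nc_eq0 gt_eqF.
apply: (cdc_add (cdc_const 1 w)); exact: (cdc_mul (cdc_const _ w) (cdc_id w)).
Qed.

Lemma mv (h : C -> C) (M : R) (a : C) : nc a < 1 ->
  (forall z, nc z < 1 -> cdc h z) ->
  (forall w, nc w = 1 -> ctw (fun z => nc z <= 1) h w) ->
  (forall w, nc w = 1 -> nc (h w) <= M) ->
  nc (h a) <= M.
Proof.
move=> a1 Hd Hb HM.
have -> : h a = (fun w => h (mob a w)) 0 by rewrite /mob add0r mulr0 addr0 invr1 mulr1.
apply: (@mv0 _ (fun w => h (mob a w)) M).
- move=> z z1; apply: (@cdc_comp _ h (mob a)).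
    by apply: Hd; have [H _] := mob_nc a1 (ltW z1); exact: H.
  exact: mob_cdc (ltW z1).
- move=> w w1; have w1' : nc w <= 1 by rewrite w1.
  have [_ [H _]] := mob_nc a1 w1'.
  apply: (ctw_comp (B := fun z => nc z <= 1)).
  + exact: Hb (H w1).
  + exact: cdc_ctw (mob_cdc a1 w1').
  + by move=> z z1; have [_ [_ H']] := mob_nc a1 z1.
- move=> w w1; apply: HM; have w1' : nc w <= 1 by rewrite w1.
  by have [_ [H _]] := mob_nc a1 w1'; apply: H.
Qed.

End P9.
Section P10.
Context {R : realType}.
Local Notation C := R[i].
Local Notation nc := (@nc R).

Lemma ltcR' (x y : R) : (x%:C < y%:C :> C) = (x < y).
Proof. exact: ltcR. Qed.

Lemma conv_cont (A : set C) (f : C -> C) (x : C) :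
  continuous_on A f -> A x -> ctw A f x.
Proof.
move=> /subspace_continuousP H Ax e e0.
have := H x Ax; move/cvgrPdist_lt => /(_ e%:C).
rewrite ltcR' => /(_ e0).
move=> /nbhs_ballP [d /= d0 Hd].
move: d0; rewrite ltcE /= => /andP[/eqP dIm dRe].
exists (complex.Re d); split => // z Az zx.
have dE : d = (complex.Re d)%:C by case: d dIm {Hd dRe zx} => a b /= ->.
have := Hd z _ Az; rewrite /from_subspace normC ltcR' ncB; apply.
by rewrite /ball /= dE normC ltcR' ncB.
Qed.

Lemma conv_der (f : C -> C) (a : C) :
  derivable (f : R[i]^o -> R[i]^o) (a : R[i]^o) 1 -> cdc f a.
Proof.
move=> /cvg_ex [l /= Hl].
move/cvgrPdist_lt: Hl => Hl.
exists (fun z => if z == a then l else (f z - f a) / (z - a)); split.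
  move=> z; case: eqP => [->|/eqP za]; first by rewrite !subrr mulr0.
  by rewrite divfK // subr_eq0.
move=> e e0.
have := Hl e%:C; rewrite ltcR' => /(_ e0).
rewrite /within /= => /nbhs_ballP [d /= d0 Hd].
move: d0; rewrite ltcE /= => /andP[/eqP dIm dRe].
have dE : d = (complex.Re d)%:C by case: d dIm {Hd dRe} => u v /= ->.
exists (complex.Re d); split => // z _ za; rewrite eqxx.
case: ifP => [_|/negbT zna]; first by rewrite subrr nc0.
have hb : ball (0 : R[i]^o) d (z - a).
  by rewrite /ball /= dE normC ltcR' sub0r ncN.
have hz : z - a != 0 by rewrite subr_eq0.
have := Hd (z - a) hb hz.
rewrite -[((z - a)%:A : R[i]^o)]/((z - a) * 1 : R[i]) mulr1 subrK.
rewrite -[((z - a)^-1 *: _ : R[i]^o)]/((z - a)^-1 * (f z - f a) : R[i]).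
by rewrite normC ltcR' ncB mulrC.
Qed.
End P10.
Section P11.
Context {R : realType}.
Local Notation C := R[i].
Local Notation nc := (@nc R).

Lemma ncX (z : C) n : nc (z ^+ n) = nc z ^+ n.
Proof. elim: n => [|n IH]; by rewrite ?expr0 ?nc1 // !exprS ncM IH. Qed.

Lemma one_C : (1 : C) = (1 : R)%:C.
Proof. by []. Qed.

Lemma n_lt (z : C) (r : R) : (`|z| < r%:C) = (nc z < r).
Proof. by rewrite normC ltcR. Qed.
Lemma n_le (z : C) (r : R) : (`|z| <= r%:C) = (nc z <= r).
Proof. by rewrite normC lecR. Qed.
Lemma n_gt (z : C) (r : R) : (r%:C < `|z|) = (r < nc z).
Proof. by rewrite normC ltcR. Qed.

Definition Ptwo (d : nat) (c : nat -> nat -> C) (x y : C) :=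
  \sum_(i < d.+1) \sum_(j < d.+1) (if (i + j <= d)%N then c i j * x ^+ i * y ^+ j else 0).

Lemma P2E d c p : poly2_eval d c p = Ptwo d c p.1 p.2.
Proof. by rewrite /poly2_eval /Ptwo; apply: eq_bigr => i _; rewrite big_mkcond. Qed.

Lemma ctw_P2 A d c (f : C -> C) w : ctw A f w -> ctw A (fun z => Ptwo d c z (f z)) w.
Proof.
move=> hf; rewrite /Ptwo.
apply: (@ctw_sum _ A d.+1 (fun i z => \sum_(j < d.+1)
   (if (i + j <= d)%N then c i j * z ^+ i * f z ^+ j else 0))) => i.
apply: (@ctw_sum _ A d.+1 (fun j z =>
   (if (i + j <= d)%N then c i j * z ^+ i * f z ^+ j else 0))) => j.
case: (i + j <= d)%N; last exact: ctw_const.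
apply: ctw_mul; last exact: ctw_pow.
apply: ctw_mul; first exact: ctw_const.
exact: ctw_pow (ctw_id _ _).
Qed.

Definition Hin (d m : nat) (c : nat -> nat -> C) (g : C -> C) (z : C) :=
  \sum_(i < d.+1) \sum_(j < d.+1)
     (if (i + j <= d)%N then c i j * z ^+ (i + m * (d - j)) * g z ^+ j else 0).

Lemma cdc_Hin d m c g z : cdc g z -> cdc (Hin d m c g) z.
Proof.
move=> hg; rewrite /Hin.
apply: (@cdc_sum _ d.+1 (fun i z => \sum_(j < d.+1)
   (if (i + j <= d)%N then c i j * z ^+ (i + m * (d - j)) * g z ^+ j else 0))) => i.
apply: (@cdc_sum _ d.+1 (fun j z =>
   (if (i + j <= d)%N then c i j * z ^+ (i + m * (d - j)) * g z ^+ j else 0))) => j.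
case: (i + j <= d)%N; last exact: cdc_const.
apply: cdc_mul; last exact: cdc_pow.
apply: cdc_mul; first exact: cdc_const.
exact: cdc_pow (cdc_id _).
Qed.

Lemma Hin_eq d m c g z : z != 0 ->
  Hin d m c g z = z ^+ (m * d) * Ptwo d c z (g z / z ^+ m).
Proof.
move=> z0; rewrite /Hin /Ptwo mulr_sumr; apply: eq_bigr => i _.
rewrite mulr_sumr; apply: eq_bigr => j _.
case: ifP => h; last by rewrite mulr0.
have jd : (j <= d)%N by apply: leq_trans h; apply: leq_addl.
have -> : (m * d = m * (d - j) + m * j)%N by rewrite -mulnDr subnK.
rewrite !exprD !exprM expr_div_n.
have : z ^+ m ^+ j != 0 by rewrite !expf_neq0.
move=> nz; field; exact: nz.
Qed.

End P11.
Local Close Scope complex_scope.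

Theorem proposition3 (R : realType) (phi : R[i] -> R[i]) :
  continuous_on [set z : R[i] | 0 < `|z| <= 1] phi ->
  holomorphic_on [set z | 0 < `|z| < 1] phi ->
  pole_or_removable_at0 phi ->
  [set (z, phi z) | z in [set z : R[i] | 0 < `|z| <= 1]]
    `<=` projective_hull [set (z, phi z) | z in [set z : R[i] | `|z| = 1]].
Proof.
move=> hcont _ [m [g [hg Eg]]] _ [z0 hz0 <-].
set A := [set z : R[i] | 0 < `|z| <= 1].
have inA z : A z <-> 0 < nc z <= 1.
  by rewrite /A /= one_C -(rmorph0 (real_complex R)) n_gt n_le.
have eq1 z : `|z| = 1 <-> nc z = 1.
  rewrite normC one_C; split => [[]//|->] //.
have hz0' : 0 < nc z0 <= 1 by apply/inA.
move: (hz0') => /andP[z0p z01].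
have gd : forall z, nc z < 1 -> cdc g z.
  move=> z z1; apply: conv_der; apply: hg.
  by rewrite /= one_C n_lt.
case: (ltP (nc z0) 1) => [zl|zg]; last first.
  have ze : nc z0 = 1 by apply/eqP; rewrite eq_le z01 zg.
  exists 1 => d c M HM; rewrite expr1n mul1r; apply: HM.
  by exists z0 => //; apply/eq1.
exists ((nc z0)^-1 ^+ m) => d c M HM.
pose Q z := Ptwo d c z (phi z).
pose H z := if nc z < 1 then Hin d m c g z else z ^+ (m * d) * Q z.
have HinQ z : 0 < nc z -> nc z < 1 -> Hin d m c g z = z ^+ (m * d) * Q z.
  move=> zp z1; have z0' : z != 0 by rewrite -nc_eq0 gt_eqF.
  rewrite Hin_eq // /Q -Eg //.
  by rewrite -(rmorph0 (real_complex R)) one_C n_gt n_lt zp z1.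
have Mb : forall w, nc w = 1 -> nc (Q w) <= M.
  move=> w w1; have := HM (w, phi w); rewrite P2E /= n_le; apply.
  by exists w => //; apply/eq1.
have := @mv R H M z0 zl.
have -> : H z0 = z0 ^+ (m * d) * Q z0 by rewrite /H zl HinQ.
rewrite ncM ncX => key.
have hz : 0 < nc z0 ^+ (m * d) by rewrite exprn_gt0.
have h1 : forall z, nc z < 1 -> cdc H z.
  move=> z z1; apply: (@cdc_local _ (Hin d m c g)); last exact/cdc_Hin/gd.
  exists (1 - nc z); first by rewrite subr_gt0.
  move=> w wz; rewrite /H.
  have : nc w < 1 by have := ncDB w z 0; rewrite !subr0; lra.
  by move=> ->.
have h2 : forall w, nc w = 1 -> ctw (fun z => nc z <= 1) H w.
  move=> w w1; move=> e e0.
  have wA : A w by apply/inA; rewrite w1 ltr01 lexx.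
  have cQ : ctw A (fun z => z ^+ (m * d) * Q z) w.
    apply: ctw_mul; first exact: ctw_pow (ctw_id _ _).
    by apply: ctw_P2; apply: conv_cont.
  have [dl [dl0 Hdl]] := cQ e e0.
  exists (Num.min dl (1 / 2)); split; first by rewrite lt_min dl0 divr_gt0.
  move=> z z1; rewrite lt_min => /andP[zd zh].
  have zp : 0 < nc z.
    have := ncDB w z 0; rewrite !subr0 w1 ncB; lra.
  have Hw : H w = w ^+ (m * d) * Q w by rewrite /H w1 ltxx.
  have Hz : H z = z ^+ (m * d) * Q z.
    rewrite /H; case: ltP => // zl'; exact: HinQ.
  rewrite Hw Hz; apply: Hdl => //; apply/inA; by rewrite zp z1.
have h3 : forall w, nc w = 1 -> nc (H w) <= M.
  move=> w w1; rewrite /H w1 ltxx ncM ncX w1 expr1n mul1r; exact: Mb.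
have K := key h1 h2 h3.
have main : nc (Q z0) <= ((nc z0)^-1 ^+ m) ^+ d * M.
  by rewrite -exprM exprVn ler_pdivlMl.
rewrite P2E /= n_le; exact: main.
Qed.
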